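(* Let $\mathcal{J}$ be a finite set, $\mathcal{J}_0=\mathcal{J}\cup\{0\}$, $(\Omega,P)$ a Borel probability space and $\mathcal{U}:\Omega\times\mathcal{J}_0\times\mathbb{R}\to\mathbb{R}$ satisfying the regularity and no-indifference assumptions in the context. Let $s,s'$ be probability vectors on $\mathcal{J}_0$ with $s\le s'$ (i.e. $s_j\le s'_j$ for all $j\in\mathcal{J}$). If $\delta\in\tilde\sigma^{-1}(s)$ and $\delta'\in\tilde\sigma^{-1}(s')$, then $\delta\wedge\delta'\in\tilde\sigma^{-1}(s)$ and $\delta\vee\delta'\in\tilde\sigma^{-1}(s')$, where $(\delta\wedge\delta')_j=\min\{\delta_j,\delta'_j\}$ and $(\delta\vee\delta')_j=\max\{\delta_j,\delta'_j\}$. That is, $s\mapsto\tilde\sigma^{-1}(s)$ is isotone in Veinott's strong set order.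
   Context: Assumption (regularity): for every $j\in\mathcal{J}_0$ and $\delta\in\mathbb{R}$ the map $\varepsilon\mapsto\mathcal{U}_{\varepsilon j}(\delta)$ is measurable, and for every $\varepsilon$, $j$ the map $\delta\mapsto\mathcal{U}_{\varepsilon j}(\delta)$ is increasing and continuous. Assumption (no indifference): for all distinct $j,j'\in\mathcal{J}_0$ and all $\delta,\delta'\in\mathbb{R}$, $P(\varepsilon:\mathcal{U}_{\varepsilon j}(\delta)=\mathcal{U}_{\varepsilon j'}(\delta'))=0$. For $\delta\in\mathbb{R}^{\mathcal{J}_0}$, $\sigma_j(\delta)=P(\varepsilon:\mathcal{U}_{\varepsilon j}(\delta_j)\ge\max_{j'\in\mathcal{J}_0}\mathcal{U}_{\varepsilon j'}(\delta_{j'}))$. For $\delta\in\mathbb{R}^{\mathcal{J}}$, $\tilde\sigma(\delta)=\sigma((0,\delta))$ (normalization $\delta_0=0$), and $\tilde\sigma^{-1}(s)=\{\delta\in\mathbb{R}^{\mathcal{J}}:\tilde\sigma(\delta)=s\}$. *)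

(* Defs.v *)
From HB Require Import structures.
From mathcomp Require Import all_boot all_order all_algebra.
From mathcomp Require Import all_classical all_reals all_analysis.
Set Implicit Arguments. Unset Strict Implicit. Unset Printing Implicit Defensive.
Import Order.TTheory GRing.Theory Num.Theory.
Import numFieldNormedType.Exports.
Local Open Scope classical_set_scope.
Local Open Scope ring_scope.

(* J0 = J ∪ {0} is modelled as [option J]; [None] is the outside option 0. *)

Section Shares.
Context {d : measure_display} {Omega : measurableType d} {R : realType}.
Context {J : finType}.

Definition regular (U : Omega -> option J -> R -> R) : Prop :=
  (forall (j : option J) (delta : R), measurable_fun setT (fun e => U e j delta)) /\
  (forall (e : Omega) (j : option J),
      {homo (U e j) : x y / x <= y} /\ continuous (U e j)).

Definition no_indifference (P : probability Omega R)
  (U : Omega -> option J -> R -> R) : Prop :=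
  forall (j j' : option J) (delta delta' : R), j <> j' ->
    P [set e | U e j delta = U e j' delta'] = 0%E.

Definition sigma (P : probability Omega R) (U : Omega -> option J -> R -> R)
  (delta : option J -> R) (j : option J) : \bar R :=
  P [set e | forall j' : option J, U e j' (delta j') <= U e j (delta j)].

Definition ext0 (delta : J -> R) : option J -> R :=
  fun j => match j with Some i => delta i | None => 0 end.

Definition sigma_tilde P U (delta : J -> R) : option J -> \bar R :=
  sigma P U (ext0 delta).

Definition in_sigma_tilde_inv P U (s : option J -> R) (delta : J -> R) : Prop :=
  forall j : option J, sigma_tilde P U delta j = (s j)%:E.

Definition prob_vector (s : option J -> R) : Prop :=
  (forall j, 0 <= s j) /\ \sum_(j : option J) s j = 1.

End Shares.

Definition vmin {J : finType} {R : realType} (a b : J -> R) : J -> R :=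
  fun j => Num.min (a j) (b j).
Definition vmax {J : finType} {R : realType} (a b : J -> R) : J -> R :=
  fun j => Num.max (a j) (b j).

(* Main.v *)
Require Import Defs.
From HB Require Import structures.
From mathcomp Require Import all_boot all_order all_algebra.
From mathcomp Require Import all_classical all_reals all_analysis.
Import Order.TTheory GRing.Theory Num.Theory.
Local Open Scope ring_scope.

Section Aux.
Context (d : measure_display) (Omega : measurableType d) (R : realType).
Context (J : finType) (P : probability Omega R) (U : Omega -> option J -> R -> R).
Hypothesis hmeas : forall j a, measurable_fun setT (fun e => U e j a).
Hypothesis hmono : forall e j, {homo (U e j) : x y / x <= y}.
Hypothesis hnoind : no_indifference P U.

Local Open Scope classical_set_scope.

Lemma mle j a k b : measurable [set e | U e j a <= U e k b].
Proof.
have := measurable_realfun.measurable_fun_ler (hmeas j a) (hmeas k b)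
  measurableT (Y := [set true]) I.
by rewrite setTI.
Qed.

Lemma meq j a k b : measurable [set e | U e j a = U e k b].
Proof.
have -> : [set e | U e j a = U e k b] =
  [set e | U e j a <= U e k b] `&` [set e | U e k b <= U e j a].
  apply/seteqP; split=> e /=; first by move=> ->.
  by move=> [h1 h2]; apply/le_anti; rewrite h1 h2.
by apply: measurableI; apply: mle.
Qed.

Definition A (dl : option J -> R) j :=
  [set e | forall j', U e j' (dl j') <= U e j (dl j)].

Lemma mA dl j : measurable (A dl j).
Proof.
have -> : A dl j = \bigcap_(j' in [set: option J]) [set e | U e j' (dl j') <= U e j (dl j)].
  apply/seteqP; split=> e /= h j'.
    by move=> _; exact: h.
  exact: h.
by apply: fin_bigcap_measurable => // j' _; apply: mle.
Qed.

Lemma sigma_mono dl dl' j : dl j <= dl' j -> (forall k, k != j -> dl' k <= dl k) ->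
  (sigma P U dl j <= sigma P U dl' j)%E.
Proof.
move=> hj hk; apply: le_measure; rewrite ?inE; try exact: mA.
move=> e /= h j'; case: (eqVneq j' j) => [->//|ne].
apply: le_trans (hmono e j' _ _ (hk _ ne)) _.
apply: le_trans (h j') _; exact: hmono e j _ _ hj.
Qed.

Lemma subadd (F : option J -> set Omega) (s : seq (option J)) :
  (forall j, measurable (F j)) ->
  (P (\big[setU/set0]_(j <- s) F j) <= \sum_(j <- s) P (F j))%E.
Proof.
move=> mF; elim: s => [|a s IH]; first by rewrite !big_nil measure0.
rewrite !big_cons; apply: le_trans (measureU2 _ _ _) _ => //.
  exact: bigsetU_measurable.
exact: leeD2l.
Qed.

Lemma add_disj (F : option J -> set Omega) (s : seq (option J)) :
  (forall j, measurable (F j)) -> uniq s ->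
  (forall j k, j != k -> F j `&` F k = set0) ->
  P (\big[setU/set0]_(j <- s) F j) = (\sum_(j <- s) P (F j))%E.
Proof.
move=> mF; elim: s => [|a s IH]; first by rewrite !big_nil measure0.
move=> /= /andP[as_ us] hd; rewrite !big_cons measureU //.
- by congr (_ + _)%E; apply: IH.
- exact: bigsetU_measurable.
apply/seteqP; split=> // e [Fa].
have : forall t, a \notin t -> (\big[setU/set0]_(j <- t) F j) e -> False.
  elim=> [|b t IHt]; first by rewrite big_nil.
  rewrite in_cons negb_or big_cons => /andP[ab at_] [Fb|]; last exact: IHt.
  by have := hd _ _ ab; move/seteqP => [+ _] => /(_ e (conj Fa Fb)).
by move=> H /(H s as_).
Qed.

Lemma inU (F : option J -> set Omega) (s : seq (option J)) e j :
  j \in s -> F j e -> (\big[setU/set0]_(j <- s) F j) e.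
Proof.
elim: s => [//|a s IH]; rewrite in_cons big_cons => /orP[/eqP->|js] Fe.
  by left.
by right; apply: IH.
Qed.

Lemma sum_ge1 dl : (1 <= \sum_(j : option J) sigma P U dl j)%E.
Proof.
rewrite -(probability_setT P).
have H := subadd (A dl) (index_enum (option J)) (mA dl).
apply: le_trans H.
apply: le_measure.
- by rewrite inE.
- by rewrite inE; apply: bigsetU_measurable => j _; exact: mA.
move=> e _.
have [j _ hj] := @arg_maxP _ _ _ None predT (fun j => U e j (dl j)) isT.
apply: (@inU (A dl) _ e j); first by rewrite mem_index_enum.
by move=> j'; apply: hj.
Qed.

Lemma sum_le1 dl : (\sum_(j : option J) sigma P U dl j <= 1)%E.
Proof.
pose N j := \big[setU/set0]_(k <- index_enum (option J) | k != j)
   [set e | U e k (dl k) = U e j (dl j)].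
have mN j : measurable (N j).
  by apply: bigsetU_measurable => k _; apply: meq.
have N0 j : P (N j) = 0%E.
  apply/le_anti; rewrite measure_ge0 andbT.
  rewrite /N big_mkcond.
  pose G k := if k != j then [set e | U e k (dl k) = U e j (dl j)] else set0.
  have mG : forall k, measurable (G k).
    by move=> k; rewrite /G; case: (k != j) => //; apply: meq.
  have H := subadd G (index_enum (option J)) mG.
  apply: le_trans H _.
  rewrite big1 // => k _; rewrite /G; case: (eqVneq k j) => [->|kj] /=; first exact: measure0.
  by apply: hnoind => kj'; move: kj; rewrite kj' eqxx.
pose B j := A dl j `\` N j.
have mB j : measurable (B j) by apply: measurableD => //; apply: mA.
have eB j : sigma P U dl j = P (B j).
  rewrite /sigma -/(A dl j) (measureDI _ (mA dl j) (mN j)).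
  rewrite [X in (_ + X)%E](_ : _ = 0%E) ?adde0 //.
  apply/le_anti; rewrite measure_ge0 andbT -(N0 j).
  apply: le_measure.
  - by rewrite inE; apply: measurableI => //; apply: mA.
  - by rewrite inE.
  - exact: subIsetr.
under eq_bigr do rewrite eB.
rewrite -add_disj //; last 2 first.
- exact: index_enum_uniq.
- move=> j k jk; apply/seteqP; split=> // e [[Aj Nj] [Ak Nk]].
  move: Nj; rewrite /N big_mkcond; apply; apply: (@inU (fun k0 => if k0 != j then [set e | U e k0 (dl k0) = U e j (dl j)] else set0)
     _ e k); first by rewrite mem_index_enum.
  rewrite eq_sym jk /=.
  by apply/le_anti; rewrite Aj Ak.
apply: probability_le1.
exact: bigsetU_measurable.
Qed.

Lemma fin_sigma dl j : sigma P U dl j = (fine (sigma P U dl j))%:E.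
Proof.
rewrite fineK // ge0_fin_numE ?measure_ge0 //.
exact: le_lt_trans (probability_le1 P (mA dl j)) (ltry 1).
Qed.

Lemma sum_fine dl : \sum_(j : option J) fine (sigma P U dl j) = 1.
Proof.
apply: EFin_inj; rewrite -sumEFin.
under eq_bigr do rewrite -fin_sigma.
by apply/le_anti; rewrite sum_le1 sum_ge1.
Qed.

Lemma key (x y : option J -> R) : (forall j, x j <= y j) ->
  \sum_(j : option J) y j <= \sum_(j : option J) x j -> forall j, x j = y j.
Proof.
move=> hxy hs j.
have h0 : \sum_(j : option J) (y j - x j) = 0.
  rewrite sumrB; apply/le_anti; rewrite subr_le0 hs subr_ge0 ler_sum //.
have := @psumr_eq0P R (option J) predT (fun j => y j - x j).
move=> /(_ (fun i _ => ltac:(rewrite subr_ge0; exact: hxy)) h0 j isT).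
by move/eqP; rewrite subr_eq0 => /eqP.
Qed.

Lemma main_sec (s s' : option J -> R) (hs : prob_vector s) (hs' : prob_vector s')
  (hle : forall j : J, s (Some j) <= s' (Some j))
  (delta delta' : J -> R)
  (hd : in_sigma_tilde_inv P U s delta) (hd' : in_sigma_tilde_inv P U s' delta') :
  in_sigma_tilde_inv P U s (vmin delta delta') /\
  in_sigma_tilde_inv P U s' (vmax delta delta').
Proof.
split.
- pose m := ext0 (vmin delta delta').
  have hmin j : m j = Num.min (ext0 delta j) (ext0 delta' j).
    by case: j => [i|] //=; rewrite minxx.
  have ge j : ((s j)%:E <= sigma P U m j)%E.
    case: (leP (ext0 delta j) (ext0 delta' j)) => h.
      rewrite -hd; apply: sigma_mono; first by rewrite hmin (min_l h).
      by move=> k _; rewrite hmin ge_min lexx.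
    case: j h => [i|]; last by rewrite ltxx.
    move=> h; apply: le_trans (_ : (s' (Some i))%:E <= _)%E.
      by rewrite lee_fin.
    rewrite -hd'; apply: sigma_mono; first by rewrite hmin (min_r (ltW h)).
    by move=> k _; rewrite hmin ge_min lexx orbT.
  have hk := @key s (fun j => fine (sigma P U m j)).
  have := hk (fun j => ltac:(rewrite -lee_fin -fin_sigma; exact: ge j)).
  rewrite sum_fine hs.2 => /(_ (lexx _)) H j.
  by rewrite /sigma_tilde -/m fin_sigma -H.
- pose M := ext0 (vmax delta delta').
  have hmax j : M j = Num.max (ext0 delta j) (ext0 delta' j).
    by case: j => [i|] //=; rewrite maxxx.
  have le j : (sigma P U M j <= (s' j)%:E)%E.
    case: (leP (ext0 delta j) (ext0 delta' j)) => h.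
      rewrite -hd'; apply: sigma_mono; first by rewrite hmax (max_r h).
      by move=> k _; rewrite hmax le_max lexx orbT.
    case: j h => [i|]; last by rewrite ltxx.
    move=> h; apply: le_trans (_ : _ <= (s (Some i))%:E)%E _; last first.
      by rewrite lee_fin.
    rewrite -hd; apply: sigma_mono; first by rewrite hmax (max_l (ltW h)).
    by move=> k _; rewrite hmax le_max lexx.
  have hk := @key (fun j => fine (sigma P U M j)) s'.
  have := hk (fun j => ltac:(rewrite -lee_fin -fin_sigma; exact: le j)).
  rewrite sum_fine hs'.2 => /(_ (lexx _)) H j.
  by rewrite /sigma_tilde -/M fin_sigma H.
Qed.

End Aux.

Theorem theorem2 (d : measure_display) (Omega : measurableType d) (R : realType)
  (J : finType) (P : probability Omega R) (U : Omega -> option J -> R -> R)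
  (hreg : regular U) (hnoind : no_indifference P U)
  (s s' : option J -> R) (hs : prob_vector s) (hs' : prob_vector s')
  (hle : forall j : J, s (Some j) <= s' (Some j))
  (delta delta' : J -> R)
  (hd : in_sigma_tilde_inv P U s delta) (hd' : in_sigma_tilde_inv P U s' delta') :
  in_sigma_tilde_inv P U s (vmin delta delta') /\
  in_sigma_tilde_inv P U s' (vmax delta delta').
Proof.
case: hreg => hm hmo.
exact: (@main_sec d Omega R J P U hm (fun e j => (hmo e j).1) hnoind).
Qed.
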